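(* Let $(A;R)\in\mathcal C$ and let $F_1,\dots,F_r$ ($r\ge1$) be distinct closed sets of $PG(A;R)$, with $U=\bigcup_{i=1}^rF_i$. Let $\rho(F_1,\dots,F_r)$ be the number of $s\in R$ with $s\subseteq U$ but $s\not\subseteq F_i$ for every $i$. Then $$-\Delta(F_1,\dots,F_r)=\delta(U)-d(U)+\rho(F_1,\dots,F_r).$$ Consequently $\Delta(F_1,\dots,F_r)\le0$, and $\Delta(F_1,\dots,F_r)=0$ if and only if $U\le A$ and every $s\in R$ with $s\subseteq U$ is contained in some $F_i$.
   Context: A set system is a pair $(A;R)$ where $R$ is a set of finite non-empty subsets of $A$; for $X\subseteq A$, $R[X]=\{s\in R: s\subseteq X\}$ and $\delta(X)=|X|-|R[X]|$. $\mathcal C$ is the class of finite set systems with $\delta(X)\ge0$ for all $X\subseteq A$. $X\le A$ means $\delta(X)\le\delta(X')$ for all $X\subseteq X'\subseteq A$. Define $d(X)=\min\{\delta(Y):X\subseteq Y\subseteq A\}$ and $\mathrm{cl}(X)=\{y: d(X\cup\{y\})=d(X)\}$; $PG(A;R)$ is the pregeometry $(A,\mathrm{cl})$ with dimension function $d$; closed sets are $F$ with $\mathrm{cl}(F)=F$. For a family $F_i$ ($i\in I=\{1,\dots,r\}$) of distinct closed sets, put $F_S=\bigcap_{i\in S}F_i$ for $\emptyset\neq S\subseteq I$, $F_\emptyset=\bigcup_iF_i$, and $\Delta(F_1,\dots,F_r)=\sum_{S\subseteq I}(-1)^{|S|}d(F_S)$. *)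

(* Defs.v *)
From HB Require Import structures.
From mathcomp Require Import all_boot all_order all_algebra.
Set Implicit Arguments. Unset Strict Implicit. Unset Printing Implicit Defensive.
Import Order.TTheory GRing.Theory Num.Theory.
Local Open Scope ring_scope.

Section SetSystems.
Variable A : finType.
Variable R : {set {set A}}.

Definition set_system : Prop := forall s, s \in R -> s != set0.

Definition ss_RX (X : {set A}) : {set {set A}} := [set s in R | s \subset X].

Definition ss_delta (X : {set A}) : int := (#|X|%:Z - #|ss_RX X|%:Z)%R.

Definition in_C : Prop := set_system /\ forall X : {set A}, (0 <= ss_delta X)%R.

Definition ss_le (X : {set A}) : Prop :=
  forall X' : {set A}, X \subset X' -> (ss_delta X <= ss_delta X')%R.

(* d(X) = min { ss_delta(Y) : X ⊆ Y ⊆ A }  (seeded with ss_delta(A), which is in range) *)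
Definition ss_d (X : {set A}) : int :=
  \big[Num.min/ss_delta [set: A]]_(Y : {set A} | X \subset Y) ss_delta Y.

Definition ss_cl (X : {set A}) : {set A} := [set y | ss_d (y |: X) == ss_d X].

Definition ss_closed (F : {set A}) : Prop := ss_cl F = F.

Definition ss_FS (r : nat) (F : 'I_r -> {set A}) (S : {set 'I_r}) : {set A} :=
  if S == set0 then \bigcup_(i < r) F i else \bigcap_(i in S) F i.

Definition ss_Delta (r : nat) (F : 'I_r -> {set A}) : int :=
  \sum_(S : {set 'I_r}) (-1) ^+ #|S| * ss_d (ss_FS F S).

Definition ss_rho (r : nat) (F : 'I_r -> {set A}) : nat :=
  #|[set s in R | (s \subset \bigcup_(i < r) F i) &&
                  [forall i : 'I_r, ~~ (s \subset F i)]]|.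

End SetSystems.

(* Main.v *)
Require Import Defs.
From HB Require Import structures.
From mathcomp Require Import all_boot all_order all_algebra.
From mathcomp Require Import zify ring.
Import Order.TTheory GRing.Theory Num.Theory.
Local Open Scope ring_scope.

Section D.
Variable A : finType.
Variable R : {set {set A}}.
Implicit Types X Y Z F G : {set A}.

Lemma d_le X Y : X \subset Y -> ss_d R X <= ss_delta R Y.
Proof. move=> h; rewrite /ss_d; exact: bigmin_le_cond. Qed.

Lemma d_ge X : ss_le R X -> ss_delta R X <= ss_d R X.
Proof. move=> h; rewrite /ss_d; apply/bigmin_geP; split; [apply: h; exact: subsetT| by move=> Y /h]. Qed.

Lemma d_eq X : ss_le R X -> ss_d R X = ss_delta R X.
Proof. by move=> h; apply/eqP; rewrite eq_le d_ge // d_le. Qed.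

Lemma d_eq_le X : ss_d R X = ss_delta R X -> ss_le R X.
Proof. by move=> h Y XY; rewrite -h d_le. Qed.

Lemma d_attained X : exists Y, X \subset Y /\ ss_d R X = ss_delta R Y.
Proof.
rewrite /ss_d; apply: (big_ind (fun v => exists Y, X \subset Y /\ v = ss_delta R Y)).
- by exists setT; rewrite subsetT.
- move=> x y [Y1 [h1 e1]] [Y2 [h2 e2]]; have [le|le] := leP x y.
  + by exists Y1.
  + by exists Y2.
- by move=> Y h; exists Y.
Qed.

Lemma d_mono X Y : X \subset Y -> ss_d R X <= ss_d R Y.
Proof. move=> h; have [Z [hZ ->]] := d_attained Y; apply: d_le; exact: subset_trans hZ. Qed.

Lemma closed_le F : ss_closed R F -> ss_le R F.
Proof.
move=> cF; apply: d_eq_le; have [Y [FY e]] := d_attained F.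
suff: Y \subset F by move=> YF; rewrite e (_ : Y = F) //; apply/eqP; rewrite eqEsubset YF.
apply/subsetP=> y yY; rewrite -cF inE; apply/eqP; apply/eqP; rewrite eq_le.
rewrite (@d_mono _ _ (subsetUr [set y] F)) andbT.
by rewrite e; apply: d_le; rewrite subUset sub1set yY.
Qed.

Lemma RX_I X Y : ss_RX R (X :&: Y) = ss_RX R X :&: ss_RX R Y.
Proof.
apply/setP=> s; rewrite !inE subsetI.
by case: (s \in R); case: (s \subset X).
Qed.

Lemma RX_U X Y : ss_RX R X :|: ss_RX R Y \subset ss_RX R (X :|: Y).
Proof.
apply/subsetP=> s; rewrite !inE => /orP[/andP[-> h]|/andP[-> h]] /=.
  exact: subset_trans h (subsetUl _ _).
exact: subset_trans h (subsetUr _ _).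
Qed.

Lemma submod X Y : ss_delta R (X :|: Y) + ss_delta R (X :&: Y) <= ss_delta R X + ss_delta R Y.
Proof.
rewrite /ss_delta RX_I.
have h1 := cardsUI X Y.
have h2 := cardsUI (ss_RX R X) (ss_RX R Y).
have h3 := subset_leq_card (RX_U X Y).
lia.
Qed.

Lemma le_capY F Y : ss_le R F -> ss_delta R (Y :&: F) <= ss_delta R Y.
Proof.
move=> h; have := h (Y :|: F) (subsetUr _ _); have := submod Y F. lia.
Qed.

Lemma le_cap F G : ss_le R F -> ss_le R G -> ss_le R (F :&: G).
Proof.
move=> hF hG Y sY.
have e : Y :&: F :&: G = F :&: G.
  apply/setP=> x; rewrite !inE; have := subsetP sY x; rewrite !inE.
  by case: (x \in Y); case: (x \in F); case: (x \in G); auto.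
have := @le_capY G (Y :&: F) hG; have := @le_capY F Y hF; rewrite e; lia.
Qed.

Lemma le_bigcap (I : finType) (S : {set I}) (H : I -> {set A}) :
  (forall i, ss_le R (H i)) -> ss_le R (\bigcap_(i in S) H i).
Proof.
move=> h; apply: (big_ind (ss_le R)) => //.
- move=> Y hY; have -> : Y = setT by apply/eqP; rewrite eqEsubset subsetT hY.
  exact: lexx.
- by move=> x y hx hy; apply: (@le_cap x y hx hy).
Qed.
End D.

Lemma alt_sum (I : finType) (B : {set I}) :
  \sum_(S : {set I} | S \subset B) (-1) ^+ #|S| = ((B == set0)%:R : int).
Proof.
have [->|/set0Pn [b bB]] := eqVneq B set0.
  rewrite (big_pred1 set0) ?cards0 ?expr0 //= => S; by rewrite subset0.
set f := fun S : {set I} => if b \in S then S :\ b else b |: S.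
have finv : involutive f.
  move=> S; rewrite /f; case bS: (b \in S).
    by rewrite setD11 setD1K.
  by rewrite setU11 setU1K ?bS.
set t := (X in X = _).
have : t = - t.
  rewrite {1}/t (reindex_inj (inv_inj finv)) /t -sumrN; apply: eq_big => S.
    rewrite /f; case: ifP => bS; apply/subsetP/subsetP => h x; have := h x;
      rewrite !inE; case: (eqVneq x b) => [->|] //= _; auto.
  move=> _; rewrite /f; case: ifP => bS.
    by rewrite [in RHS](cardsD1 b S) bS add1n exprS mulN1r opprK.
  by rewrite cardsU1 bS add1n exprS mulN1r.
rewrite /=; lia.
Qed.

Lemma card_sum (T : finType) (X : {set T}) :
  (#|X|%:R : int) = \sum_(x : T) ((x \in X)%:R : int).
Proof.
rewrite -sum1_card natr_sum big_mkcond; apply: eq_bigr => x _; by case: (x \in X).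
Qed.

Lemma incl_excl (T I : finType) (G : I -> {set T}) :
  \sum_(S : {set I}) (-1) ^+ #|S| * (#|\bigcap_(i in S) G i|%:R : int)
  = #|T|%:Z - #|\bigcup_i G i|%:Z.
Proof.
have -> : #|T|%:Z - #|\bigcup_i G i|%:Z = #|~: \bigcup_i G i|%:R.
  have := cardsC (\bigcup_i G i); lia.
rewrite (@card_sum _ (~: \bigcup_i G i)).
under [LHS]eq_bigr => S _ do rewrite (@card_sum T (\bigcap_(i in S) G i)) mulr_sumr.
rewrite exchange_big /=; apply: eq_bigr => x _.
transitivity (\sum_(S : {set I} | S \subset [set i | x \in G i]) ((-1) ^+ #|S| : int)).
  rewrite [RHS]big_mkcond; apply: eq_bigr => S _.
  have -> : (x \in \bigcap_(i in S) G i) = (S \subset [set i | x \in G i]).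
    apply/bigcapP/subsetP => h i; have := h i; rewrite inE //.
  by case: ifP; rewrite ?mulr1 ?mulr0.
rewrite alt_sum; congr (_ %:R); congr (nat_of_bool _); rewrite inE.
apply/idP/idP => [/eqP h|h].
  apply/negP => /bigcupP [i _ xi].
  by move/setP: h => /(_ i); rewrite !inE xi.
apply/eqP/setP=> i; rewrite !inE; apply/negP => xi; move/negP: h; apply; apply/bigcupP; by exists i.
Qed.

Section Main.
Variable A : finType.
Variable R : {set {set A}}.

Lemma RX_bigcap (r : nat) (F : 'I_r -> {set A}) (S : {set 'I_r}) : S != set0 ->
  ss_RX R (\bigcap_(i in S) F i) = \bigcap_(i in S) ss_RX R (F i).
Proof.
case/set0Pn=> j jS; apply/setP=> s; rewrite inE; apply/andP/bigcapP.
  move=> [sR /subsetP h] i iS; rewrite inE sR /=; apply/subsetP=> x /h /bigcapP; exact.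
move=> h; split; first by have := h j jS; rewrite inE => /andP[].
apply/subsetP=> x xs; apply/bigcapP=> i iS; have := h i iS; rewrite inE => /andP[_ /subsetP]; exact.
Qed.

Lemma key (r : nat) (F : 'I_r -> {set A}) : (forall i, ss_closed R (F i)) ->
  ss_Delta R F = ss_d R (\bigcup_(i < r) F i) - #|\bigcup_(i < r) F i|%:Z
                 + #|\bigcup_(i < r) ss_RX R (F i)|%:Z.
Proof.
move=> hcl.
pose c := ss_d R (\bigcup_(i < r) F i) - #|[set: A]|%:Z + #|[set: {set A}]|%:Z.
have eS : forall S : {set 'I_r}, (-1) ^+ #|S| * ss_d R (ss_FS F S) =
   ((-1) ^+ #|S| * #|\bigcap_(i in S) F i|%:R - (-1) ^+ #|S| * #|\bigcap_(i in S) ss_RX R (F i)|%:R)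
   + (S == set0)%:R * c.
  move=> S; rewrite /ss_FS; case: eqVneq => [->|nS].
    rewrite !big_set0 cards0 expr0 !mul1r /c /= !natz; lia.
  rewrite d_eq; last by apply: le_bigcap => i; apply: closed_le; exact: hcl.
  rewrite /ss_delta RX_bigcap // mul0r addr0 -mulrBr; congr (_ * _); lia.
rewrite /ss_Delta (eq_bigr _ (fun S _ => eS S)) big_split /= sumrB !incl_excl.
rewrite (bigD1 set0) //= eqxx mul1r.
have -> : \sum_(S : {set 'I_r} | S != set0) (S == set0)%:R * c = 0.
  by apply: big1 => S /negbTE ->; rewrite mul0r.
rewrite /c !cardsT addr0; set x := (#|A|%:Z); set y := (#|{set A}|%:Z); ring.
Qed.

End Main.

Lemma rho_card (A : finType) (R : {set {set A}}) (r : nat) (F : 'I_r -> {set A}) :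
  #|ss_RX R (\bigcup_(i < r) F i)| = (#|\bigcup_(i < r) ss_RX R (F i)| + ss_rho R F)%N.
Proof.
rewrite -(cardsID (\bigcup_(i < r) ss_RX R (F i)) (ss_RX R (\bigcup_(i < r) F i))) /ss_rho.
congr (_ + _)%N; apply: eq_card => s; rewrite !inE.
  apply/andP/idP => [[_ //]|hi]; split => //; move/bigcupP: hi => [i _].
  rewrite inE => /andP [-> /subset_trans]; apply; exact: (bigcup_sup i).
case sR: (s \in R) => /=; last by rewrite andbF.
rewrite andbC; congr (_ && _); apply/negP/forallP => [h i|h /bigcupP [i _]].
  by apply/negP => hi; apply: h; apply/bigcupP; exists i => //; rewrite inE sR.
by rewrite inE sR /=; apply/negP.
Qed.

Theorem mainTheorem7 (A : finType) (R : {set {set A}}) (r : nat)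
  (F : 'I_r -> {set A}) :
  in_C R -> (0 < r)%N -> injective F -> (forall i, ss_closed R (F i)) ->
  let U := \bigcup_(i < r) F i in
  [/\ - ss_Delta R F = ss_delta R U - ss_d R U + (ss_rho R F)%:Z,
      ss_Delta R F <= 0 &
      (ss_Delta R F = 0 <->
        (ss_le R U /\
         forall s, s \in R -> s \subset U -> exists i, s \subset F i))].
Proof.
move=> _ _ _ hcl U.
have hk := @key A R r F hcl.
have hr := @rho_card A R r F.
have E1 : - ss_Delta R F = ss_delta R U - ss_d R U + (ss_rho R F)%:Z.
  rewrite hk /ss_delta -/U hr; lia.
have hd : ss_d R U <= ss_delta R U by apply: d_le.
split.
- exact: E1.
- lia.
- split.
  + move=> h0; have h1 : ss_d R U = ss_delta R U by lia.
    have h2 : ss_rho R F = 0%N by lia.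
    split; first exact: d_eq_le.
    move=> s sR sU; move/eqP: h2; rewrite cards_eq0 => /eqP /setP /(_ s).
    rewrite !inE sR sU /= => /negbT; rewrite negb_forall => /existsP [i].
    by rewrite negbK => hi; exists i.
  + move=> [hle hs]; have h1 := @d_eq A R U hle.
    suff : ss_rho R F = 0%N by lia.
    apply/eqP; rewrite cards_eq0; apply/eqP/setP => s; rewrite !inE.
    apply/negP => /andP [sR /andP [sU /forallP h]].
    by have [i hi] := hs s sR sU; move: (h i); rewrite hi.
Qed.
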